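(* Let $\mathbf{k}$ be a field, $Q$ a finite connected quiver, $\Lambda=\mathbf{k}Q/\mathcal{J}^2$ ($\mathcal{J}$ the arrow ideal), $n\ge2$, and assume $\mathcal{C}\subseteq\operatorname{mod}\Lambda$ is an $n$-cluster tilting subcategory. Then for all vertices $v,u\in Q_0$ there is at most one arrow $\alpha\in Q_1$ with $s(\alpha)=v$ and $t(\alpha)=u$.
   Context: Modules are finite-dimensional right modules; $s,t$ are the source and target maps of $Q$. $\mathcal{C}$ is $n$-cluster tilting if it is functorially finite and $\mathcal{C}=\{X\mid \operatorname{Ext}^i(X,\mathcal{C})=0\ \forall 0<i<n\}=\{X\mid\operatorname{Ext}^i(\mathcal{C},X)=0\ \forall 0<i<n\}$. *)

(* Defs.v *)
From HB Require Import structures.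
From mathcomp Require Import all_boot all_order all_algebra.
Set Implicit Arguments. Unset Strict Implicit. Unset Printing Implicit Defensive.
Import GRing.Theory.
Local Open Scope ring_scope.

(* Paths are composed left to right: alpha * beta <> 0 in kQ iff t alpha = s beta.
   A finite-dimensional right module over Lambda = kQ/J^2 is a space k^N of
   row vectors (m . x  is  m *m X) together with matrices E_v (vertex
   idempotents) and A_a (arrows) satisfying the defining relations of the
   presentation of kQ/J^2:
     e_v e_v = e_v, e_v e_w = 0 (v <> w), sum_v e_v = 1,
     e_(s a) a = a = a e_(t a),  a b = 0 for all arrows a, b. *)

Section Modules.
Variables (k : fieldType) (Q0 Q1 : finType) (s t : Q1 -> Q0).

Record rmod := RMod {
  rdim : nat;
  ridem : Q0 -> 'M[k]_rdim;
  rarr : Q1 -> 'M[k]_rdim;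
  ridem_idem : forall v, ridem v *m ridem v = ridem v;
  ridem_orth : forall v w, v != w -> ridem v *m ridem w = 0;
  ridem_sum : \sum_v ridem v = 1%:M;
  rarr_src : forall a, ridem (s a) *m rarr a = rarr a;
  rarr_tgt : forall a, rarr a *m ridem (t a) = rarr a;
  rarr_rad2 : forall a b, rarr a *m rarr b = 0
}.

Definition hom (M N : rmod) (f : 'M[k]_(rdim M, rdim N)) : Prop :=
  (forall v, ridem M v *m f = f *m ridem N v) /\
  (forall a, rarr M a *m f = f *m rarr N a).

Definition ses (Y E X : rmod) (f : 'M[k]_(rdim Y, rdim E))
    (g : 'M[k]_(rdim E, rdim X)) : Prop :=
  [/\ hom f, hom g, row_free f, row_full g &
      f *m g = 0 /\ (\rank f + \rank g)%N = rdim E].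

Definition ext1_zero (X Y : rmod) : Prop :=
  forall (E : rmod) f g, @ses Y E X f g ->
    exists h : 'M[k]_(rdim X, rdim E), hom h /\ h *m g = 1%:M.

Definition projective (P : rmod) : Prop :=
  forall (M N : rmod) (g : 'M[k]_(rdim M, rdim N)) (h : 'M[k]_(rdim P, rdim N)),
    hom g -> row_full g -> hom h ->
    exists l : 'M[k]_(rdim P, rdim M), hom l /\ l *m g = h.

Fixpoint syz (m : nat) (X Z : rmod) : Prop :=
  match m with
  | 0 => Z = X
  | m'.+1 => exists (W P : rmod) f g, syz m' X W /\ projective P /\ @ses Z P W f g
  end.

(* Ext^i(X, Y) = 0 (i >= 1), by dimension shifting:
   Ext^i(X,Y) = Ext^1(Omega^(i-1) X, Y), for any choice of syzygy. *)
Definition ext_zero (i : nat) (X Y : rmod) : Prop :=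
  forall Z, syz i.-1 X Z -> ext1_zero Z Y.

Definition contravariantly_finite (C : rmod -> Prop) : Prop :=
  forall X : rmod, exists (CX : rmod) (f : 'M[k]_(rdim CX, rdim X)),
    [/\ C CX, hom f &
      forall (C' : rmod) (g : 'M[k]_(rdim C', rdim X)), C C' -> hom g ->
        exists h : 'M[k]_(rdim C', rdim CX), hom h /\ h *m f = g].

Definition covariantly_finite (C : rmod -> Prop) : Prop :=
  forall X : rmod, exists (XC : rmod) (f : 'M[k]_(rdim X, rdim XC)),
    [/\ C XC, hom f &
      forall (C' : rmod) (g : 'M[k]_(rdim X, rdim C')), C C' -> hom g ->
        exists h : 'M[k]_(rdim XC, rdim C'), hom h /\ f *m h = g].

Definition functorially_finite (C : rmod -> Prop) : Prop :=
  contravariantly_finite C /\ covariantly_finite C.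

Definition n_cluster_tilting (n : nat) (C : rmod -> Prop) : Prop :=
  [/\ functorially_finite C,
      (forall X, C X <-> (forall Y, C Y -> forall i, (0 < i < n)%N -> ext_zero i X Y)) &
      (forall X, C X <-> (forall Y, C Y -> forall i, (0 < i < n)%N -> ext_zero i Y X))].

End Modules.

Arguments rmod k {Q0 Q1} s t.

Definition quiver_connected (Q0 Q1 : finType) (s t : Q1 -> Q0) : Prop :=
  forall x y : Q0,
    connect [rel u w | [exists a, ((s a == u) && (t a == w)) || ((s a == w) && (t a == u))]] x y.

(* Main.v *)
Require Import Defs.
From HB Require Import structures.
From mathcomp Require Import all_boot all_order all_algebra.
Set Implicit Arguments. Unset Strict Implicit. Unset Printing Implicit Defensive.
Import GRing.Theory.
Local Open Scope ring_scope.

Section Gen.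
Variables (k : fieldType) (Q0 Q1 : finType) (s t : Q1 -> Q0).
Local Notation mod := (rmod k s t).
Local Notation Hom M N f := (@Defs.hom k Q0 Q1 s t M N f).

Lemma hom1 (M : mod) : Hom M M 1%:M.
Proof. by split => ?; rewrite mul1mx mulmx1. Qed.
Lemma hom0 (M N : mod) : Hom M N 0.
Proof. by split => ?; rewrite mulmx0 mul0mx. Qed.
Lemma homM (M N P : mod) f g : Hom M N f -> Hom N P g -> Hom M P (f *m g).
Proof.
case=> f1 f2 [g1 g2]; split => ?.
  by rewrite mulmxA f1 -mulmxA g1 mulmxA.
by rewrite mulmxA f2 -mulmxA g2 mulmxA.
Qed.
Lemma homB (M N : mod) f g : Hom M N f -> Hom M N g -> Hom M N (f - g).
Proof.
case=> f1 f2 [g1 g2]; split => ?.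
  by rewrite mulmxBr mulmxBl f1 g1.
by rewrite mulmxBr mulmxBl f2 g2.
Qed.

Lemma ses_ker (Y E X : mod) f g (W : 'M_(rdim E, rdim E)) :
  @ses k Q0 Q1 s t Y E X f g -> W *m g = 0 -> W = W *m pinvmx f *m f.
Proof.
case=> _ _ _ _ [fg0 rk] Wg.
have fk : (f <= kermx g)%MS by apply/sub_kermxP.
have kf : (kermx g <= f)%MS.
  have := mxrank_leqif_sup fk; case=> _ <-.
  have e : (rdim E - \rank g)%N = \rank f by rewrite -[X in (X - _)%N]rk addnK.
  by rewrite mxrank_ker e.
by rewrite mulmxKpV //; apply: submx_trans kf; apply/sub_kermxP.
Qed.

Lemma proj_ext1 (P Y : mod) : projective P -> ext1_zero P Y.
Proof.
move=> pP E f g [_ hg _ fg _].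
have [l [hl lg]] := pP _ _ g 1%:M hg fg (hom1 P).
by exists l.
Qed.

Lemma free_cancel m n p (A B : 'M[k]_(m, n)) (f : 'M[k]_(n, p)) :
  row_free f -> A *m f = B *m f -> A = B.
Proof.
move=> ff e; apply/eqP; rewrite -subr_eq0 -(mulmx_free_eq0 _ ff).
by rewrite mulmxBl e subrr.
Qed.

Lemma full_cancel m n p (A B : 'M[k]_(n, p)) (g : 'M[k]_(m, n)) :
  row_full g -> g *m A = g *m B -> A = B.
Proof.
case/row_fullP=> G GG e.
by rewrite -(mul1mx A) -(mul1mx B) -GG -!mulmxA e.
Qed.

Lemma syz_proj_step (Z P W : mod) f g :
  projective P -> projective W -> @ses k Q0 Q1 s t Z P W f g -> projective Z.
Proof.
move=> pP pW sfg; case: (sfg) => hf hg ff fg [fg0 _].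
have [sc [hsc scg]] := pW _ _ g 1%:M hg fg (hom1 W).
set r := (1%:M - g *m sc) *m pinvmx f.
have rf : r *m f = 1%:M - g *m sc.
  rewrite /r -(ses_ker sfg) //.
  by rewrite mulmxBl mul1mx -mulmxA scg mulmx1 subrr.
have hgs : Hom P P (1%:M - g *m sc) by apply: homB; [apply: hom1 | apply: homM].
have hr : Hom P Z r.
  case: hf => f1 f2; case: hgs => g1 g2.
  split => x; apply: (free_cancel ff).
    by rewrite -mulmxA rf -mulmxA f1 mulmxA rf g1.
  by rewrite -mulmxA rf -mulmxA f2 mulmxA rf g2.
have fr : f *m r = 1%:M.
  apply: (free_cancel ff); rewrite mul1mx -mulmxA rf mulmxBr mulmx1 mulmxA fg0.
  by rewrite mul0mx subr0.
move=> M N g' h hg' fg' hh.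
have [l [hl lg]] := pP _ _ g' (r *m h) hg' fg' (homM hr hh).
exists (f *m l); split; first exact: homM hf hl.
by rewrite -mulmxA lg mulmxA fr mul1mx.
Qed.

Lemma syz_proj m (X Z : mod) : projective X -> syz m X Z -> projective Z.
Proof.
elim: m Z => [|m IH] Z pX /=; first by move=> ->.
case=> W [P [f [g [sW [pP sfg]]]]].
exact: syz_proj_step pP (IH _ pX sW) sfg.
Qed.

Lemma proj_ext (P Y : mod) i : projective P -> ext_zero i P Y.
Proof. by move=> pP Z sZ; apply: proj_ext1; apply: syz_proj sZ. Qed.


Lemma retract_ext1 (D Z : mod) :
  (forall (E : mod) (f : 'M_(rdim D, rdim E)), Hom D E f -> row_free f ->
     exists r : 'M_(rdim E, rdim D), Hom E D r /\ f *m r = 1%:M) ->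
  ext1_zero Z D.
Proof.
move=> ret E f g sfg; case: (sfg) => hf hg ff fg [fg0 _].
have [r [hr fr]] := ret E f hf ff.
have [G GG] := row_fullP fg.
set q := 1%:M - r *m f.
have hq : Hom E E q by apply: homB; [apply: hom1 | apply: homM].
have gh : g *m (G *m q) = q.
  have Wg : (g *m G - 1%:M) *m g = 0.
    by rewrite mulmxBl mul1mx -mulmxA GG mulmx1 subrr.
  have e := ses_ker sfg Wg.
  have fq : f *m q = 0 by rewrite /q mulmxBr mulmx1 mulmxA fr mul1mx subrr.
  rewrite mulmxA.
  have -> : g *m G = (g *m G - 1%:M) + 1%:M by rewrite subrK.
  by rewrite mulmxDl mul1mx e -mulmxA fq mulmx0 add0r.
exists (G *m q); split.
  case: hg => g1 g2; case: hq => q1 q2.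
  split => x; apply: (full_cancel fg).
    by rewrite [RHS]mulmxA gh mulmxA -g1 -mulmxA gh q1.
  by rewrite [RHS]mulmxA gh mulmxA -g2 -mulmxA gh q2.
by rewrite -mulmxA /q mulmxBl mul1mx -mulmxA fg0 mulmx0 subr0 GG.
Qed.


Lemma idm_mulM (M : mod) v w :
  ridem M v *m ridem M w = if v == w then ridem M w else 0.
Proof. by case: eqP => [->|/eqP]; [apply: ridem_idem | apply: ridem_orth]. Qed.

Lemma idm_arrM (M : mod) w c :
  ridem M w *m rarr M c = if w == s c then rarr M c else 0.
Proof.
rewrite -{1}rarr_src mulmxA idm_mulM; case: eqP => _; last by rewrite mul0mx.
by rewrite rarr_src.
Qed.

Lemma arr_idmM (M : mod) c w :
  rarr M c *m ridem M w = if t c == w then rarr M c else 0.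
Proof.
rewrite -{1}rarr_tgt -mulmxA idm_mulM; case: eqP => [<-|_]; last by rewrite mulmx0.
by rewrite rarr_tgt.
Qed.

End Gen.

Section Mono.
Variables (k : fieldType) (Q0 Q1 : finType) (s t : Q1 -> Q0).
Variables (B : finType) (lab : B -> Q0) (act : Q1 -> B -> B -> bool).
Hypothesis Hs : forall c x y, act c x y -> lab x = s c.
Hypothesis Ht : forall c x y, act c x y -> lab y = t c.
Hypothesis H2 : forall c d x y z, act c x y -> act d y z -> False.

Definition idm (w : Q0) : 'M[k]_#|B| :=
  \matrix_(i, j) ((i == j) && (lab (enum_val i) == w))%:R.
Definition arm (c : Q1) : 'M[k]_#|B| :=
  \matrix_(i, j) (act c (enum_val i) (enum_val j))%:R.

Lemma idmEl n (X : 'M[k]_(#|B|, n)) w i j :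
  (idm w *m X) i j = (lab (enum_val i) == w)%:R * X i j.
Proof.
rewrite !mxE (bigD1 i) //= big1 ?addr0 ?mxE ?eqxx //.
by move=> m nm; rewrite mxE eq_sym (negbTE nm) mul0r.
Qed.

Lemma idmEr n (X : 'M[k]_(n, #|B|)) w i j :
  (X *m idm w) i j = X i j * (lab (enum_val j) == w)%:R.
Proof.
rewrite !mxE (bigD1 j) //= big1 ?addr0 ?mxE ?eqxx //.
by move=> m nm; rewrite mxE (negbTE nm) mulr0.
Qed.

Lemma idm_idem w : idm w *m idm w = idm w.
Proof.
apply/matrixP => i j; rewrite idmEl mxE.
by case: (lab _ == w); rewrite ?andbT ?andbF ?mul1r ?mul0r.
Qed.

Lemma idm_orth v w : v != w -> idm v *m idm w = 0.
Proof.
move=> vw; apply/matrixP => i j; rewrite idmEl !mxE.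
case E1: (lab (enum_val i) == v); last by rewrite mul0r.
by rewrite (eqP E1) (negbTE vw) andbF mulr0.
Qed.

Lemma idm_sum : \sum_v idm v = 1%:M.
Proof.
apply/matrixP => i j; rewrite summxE (bigD1 (lab (enum_val i))) //= big1.
  by rewrite !mxE eqxx andbT addr0.
by move=> v nv; rewrite mxE [lab _ == _]eq_sym (negbTE nv) andbF.
Qed.

Lemma arm_src c : idm (s c) *m arm c = arm c.
Proof.
apply/matrixP => i j; rewrite idmEl mxE.
by case A: (act _ _ _); [rewrite (Hs A) eqxx mul1r | rewrite mulr0].
Qed.

Lemma arm_tgt c : arm c *m idm (t c) = arm c.
Proof.
apply/matrixP => i j; rewrite idmEr mxE.
by case A: (act _ _ _); [rewrite (Ht A) eqxx mulr1 | rewrite mul0r].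
Qed.

Lemma arm_rad2 c d : arm c *m arm d = 0.
Proof.
apply/matrixP => i j; rewrite !mxE big1 // => m _; rewrite !mxE.
case A: (act c _ _); last by rewrite mul0r.
case A': (act d _ _); last by rewrite mulr0.
by case: (H2 A A').
Qed.

Definition mkmod : rmod k s t :=
  RMod idm_idem idm_orth idm_sum arm_src arm_tgt arm_rad2.

End Mono.

Section Main.
Variables (k : fieldType) (Q0 Q1 : finType) (s t : Q1 -> Q0).
Local Notation mod := (rmod k s t).
Local Notation Hom M N f := (@Defs.hom k Q0 Q1 s t M N f).
Local Notation B := ((Q0 + Q1)%type : finType).
Local Notation ev := (@enum_val B predT).
Local Notation rk := (@enum_rank B).

Definition labL (x : B) := match x with inl w => w | inr c => t c end.
Definition actL c (x y : B) := (x == inl (s c)) && (y == inr c).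
Definition labD (x : B) := match x with inl w => w | inr c => s c end.
Definition actD c (x y : B) := (x == inr c) && (y == inl (t c)).

Lemma HsL c x y : actL c x y -> labL x = s c. Proof. by case/andP => /eqP -> _. Qed.
Lemma HtL c x y : actL c x y -> labL y = t c. Proof. by case/andP => _ /eqP ->. Qed.
Lemma H2L c d x y z : actL c x y -> actL d y z -> False.
Proof. by case/andP => _ /eqP -> /andP []. Qed.
Lemma HsD c x y : actD c x y -> labD x = s c. Proof. by case/andP => /eqP -> _. Qed.
Lemma HtD c x y : actD c x y -> labD y = t c. Proof. by case/andP => _ /eqP ->. Qed.
Lemma H2D c d x y z : actD c x y -> actD d y z -> False.
Proof. by case/andP => _ /eqP -> /andP []. Qed.

Definition Lam : mod := mkmod k HsL HtL H2L.
Definition Dl : mod := mkmod k HsD HtD H2D.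

Lemma sum_ev n (F : 'I_#|B| -> 'M[k]_(1, n)) (y : B) (b : B -> bool) :
  \sum_m (b (ev m) && (ev m == y))%:R *: F m = (b y)%:R *: F (rk y).
Proof.
rewrite (bigD1 (rk y)) //= enum_rankK eqxx andbT big1 ?addr0 // => m nm.
case E: (ev m == y); last by rewrite andbF scale0r.
by case/negP: nm; rewrite -(eqP E) enum_valK.
Qed.

Lemma rowLidm n (X : 'M[k]_(#|B|, n)) w i :
  row i (ridem Lam w *m X) = (labL (ev i) == w)%:R *: row i X.
Proof. by apply/rowP => j; rewrite [LHS]mxE /= idmEl !mxE. Qed.

Lemma rowLarm n (X : 'M[k]_(#|B|, n)) c i :
  row i (rarr Lam c *m X) = (ev i == inl (s c))%:R *: row (rk (inr c)) X.
Proof.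
apply/rowP => j; rewrite [LHS]mxE /= mxE.
rewrite (bigD1 (rk (inr c))) //= big1 ?addr0.
  by rewrite !mxE enum_rankK /actL eqxx andbT.
move=> m nm; rewrite mxE /actL.
case E: (ev m == inr c); last by rewrite andbF mul0r.
by case/negP: nm; rewrite -(eqP E) enum_valK.
Qed.


Lemma Lam_proj : projective Lam.
Proof.
move=> M N g h [g1 g2] fg [h1 h2].
have [G GG] := row_fullP fg.
pose mv (w : Q0) : 'rV[k]_(rdim M) := row (rk (inl w)) h *m G.
pose Lrow (x : B) : 'rV[k]_(rdim M) :=
  match x with inl w => mv w *m ridem M w | inr c => mv (s c) *m rarr M c end.
pose l : 'M[k]_(rdim Lam, rdim M) := \matrix_(i, j) (Lrow (ev i)) 0 j.
have rowl i : row i l = Lrow (ev i) by apply/rowP => j; rewrite !mxE.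
have mvg w : mv w *m g = row (rk (inl w)) h.
  by rewrite /mv -mulmxA GG mulmx1.
exists l; split; last first.
  apply/row_matrixP => i; rewrite row_mul rowl.
  case E: (ev i) => [w|c]; have -> : i = rk (ev i) by rewrite enum_valK.
    rewrite E /= -mulmxA g1 mulmxA mvg -row_mul -h1 rowLidm enum_rankK /=.
    by rewrite eqxx scale1r.
  rewrite E /= -mulmxA g2 mulmxA mvg -row_mul -h2 rowLarm enum_rankK /=.
  by rewrite eqxx scale1r.
split => w; apply/row_matrixP => i.
  rewrite rowLidm row_mul !rowl; case: (ev i) => [x|c] /=.
    by rewrite -mulmxA idm_mulM; case: eqP => [->|_]; rewrite ?scale1r ?scale0r ?mulmx0.
  rewrite -mulmxA arr_idmM /labL.
  by case: (t c == w); rewrite ?scale1r ?scale0r ?mulmx0.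
rewrite rowLarm row_mul !rowl enum_rankK; case: (ev i) => [x|c] /=.
  rewrite -mulmxA idm_arrM.
  case: (eqVneq x (s w)) => [->|ne]; first by rewrite !eqxx scale1r.
  rewrite mulmx0 (_ : (inl x == _) = false) ?scale0r //.
  by apply/negbTE; apply: contra ne => /eqP [->].
by rewrite scale0r -mulmxA rarr_rad2 mulmx0.
Qed.


Lemma rk_eq (i : 'I_#|B|) (x : B) : (i == rk x) = (ev i == x).
Proof. by apply/eqP/eqP => [->|<-]; rewrite ?enum_rankK ?enum_valK. Qed.

Lemma inl_eq (x y : Q0) : (inl x == inl y :> B) = (x == y).
Proof. by apply/eqP/eqP => [[]|->]. Qed.

Lemma DarmE n (X : 'M[k]_(#|B|, n)) c i j :
  (rarr Dl c *m X) i j = (ev i == inr c)%:R * X (rk (inl (t c))) j.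
Proof.
rewrite /= mxE (bigD1 (rk (inl (t c)))) //= big1 ?addr0.
  by rewrite !mxE enum_rankK /actD eqxx andbT.
move=> m nm; rewrite mxE /actD.
case E: (ev m == inl (t c)); first by case/negP: nm; rewrite rk_eq.
by rewrite andbF mul0r.
Qed.

Lemma DarmEr n (X : 'M[k]_(n, #|B|)) c i j :
  (X *m rarr Dl c) i j = X i (rk (inr c)) * (ev j == inl (t c))%:R.
Proof.
rewrite /= mxE (bigD1 (rk (inr c))) //= big1 ?addr0.
  by rewrite !mxE enum_rankK /actD eqxx.
move=> m nm; rewrite mxE /actD.
case E: (ev m == inr c); first by case/negP: nm; rewrite rk_eq.
by rewrite mulr0.
Qed.

Lemma LarmEr n (X : 'M[k]_(n, #|B|)) c i j :
  (X *m rarr Lam c) i j = X i (rk (inl (s c))) * (ev j == inr c)%:R.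
Proof.
rewrite /= mxE (bigD1 (rk (inl (s c)))) //= big1 ?addr0.
  by rewrite !mxE enum_rankK /actL eqxx.
move=> m nm; rewrite mxE /actL.
case E: (ev m == inl (s c)); first by case/negP: nm; rewrite rk_eq.
by rewrite mulr0.
Qed.

Lemma D_ret (E : mod) (f : 'M_(rdim Dl, rdim E)) : Hom Dl E f -> row_free f ->
  exists r : 'M_(rdim E, rdim Dl), Hom E Dl r /\ f *m r = 1%:M.
Proof.
move=> [f1 f2] ff; have [F FF] := row_freeP ff.
pose AE (x : B) := match x with inl w => ridem E w | inr c => rarr E c end.
pose AD (x : B) := match x with inl w => ridem Dl w | inr c => rarr Dl c end.
have hfA x : f *m AE x = AD x *m f by case: x => [w|c] /=; rewrite ?f1 ?f2.
pose eps : 'cV[k]_(rdim Dl) := \col_i (if ev i is inl _ then 1 else 0).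
have ADeps x i : (AD x *m eps) i 0 = (i == rk x)%:R.
  case: x => [w|c] /=.
    rewrite idmEl !mxE rk_eq; case: (ev i) => [y|c] /=; rewrite ?mulr1 ?mulr0 //.
  by rewrite DarmE !mxE enum_rankK mulr1 rk_eq.
pose phi := F *m eps.
pose r : 'M[k]_(rdim E, rdim Dl) := \matrix_(i, j) (AE (ev j) *m phi) i 0.
have rE p (X : 'M[k]_(p, rdim E)) i j : (X *m r) i j = (X *m (AE (ev j) *m phi)) i 0.
  by rewrite !mxE; apply: eq_bigr => m _; rewrite mxE.
exists r; split; last first.
  apply/matrixP => i j; rewrite rE mulmxA hfA -mulmxA (mulmxA f F eps) FF mul1mx.
  by rewrite ADeps mxE enum_valK.
split => w; apply/matrixP => i j; rewrite rE mulmxA.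
  rewrite idmEr [r i j]mxE.
  have -> : ridem E w *m AE (ev j) = (labD (ev j) == w)%:R *: AE (ev j).
    case: (ev j) => [y|c] /=.
      rewrite idm_mulM eq_sym; case: (y == w); by rewrite ?scale1r ?scale0r.
    rewrite idm_arrM eq_sym; case: (s c == w); by rewrite ?scale1r ?scale0r.
  by rewrite -scalemxAl mxE mulrC.
rewrite DarmEr [r _ _]mxE.
have -> : rarr E w *m AE (ev j) = (ev j == inl (t w))%:R *: rarr E w.
  case: (ev j) => [y|c] /=.
    rewrite arr_idmM inl_eq eq_sym; case: (y == t w); by rewrite ?scale1r ?scale0r.
  by rewrite rarr_rad2 scale0r.
by rewrite -scalemxAl mxE mulrC enum_rankK.
Qed.


Section Ext.
Variable a : Q1.

Definition phi (c : Q1) : 'M[k]_(rdim Dl, rdim Lam) :=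
  if c == a then delta_mx (rk (inr a)) (rk (inr a)) else 0.

Lemma rk_inj_eq (x y : B) : (rk x == rk y) = (x == y).
Proof. by rewrite rk_eq enum_rankK. Qed.

Lemma phi_src c : ridem Dl (s c) *m phi c = phi c.
Proof.
rewrite /phi; case: (eqVneq c a) => [->|_]; last by rewrite mulmx0.
apply/matrixP => i j; rewrite idmEl !mxE.
case: (eqVneq i (rk (inr a))) => [->|]; last by rewrite mulr0.
by rewrite enum_rankK /= eqxx mul1r.
Qed.

Lemma phi_tgt c : phi c *m ridem Lam (t c) = phi c.
Proof.
rewrite /phi; case: (eqVneq c a) => [->|_]; last by rewrite mul0mx.
apply/matrixP => i j; rewrite idmEr !mxE.
case: (eqVneq j (rk (inr a))) => [->|]; last by rewrite andbF mul0r.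
by rewrite enum_rankK /= eqxx mulr1.
Qed.

Lemma phi_L c d : phi c *m rarr Lam d = 0.
Proof.
rewrite /phi; case: (eqVneq c a) => [_|_]; last by rewrite mul0mx.
by apply/matrixP => i j; rewrite LarmEr !mxE rk_inj_eq andbF mul0r.
Qed.

Lemma phi_D c d : rarr Dl c *m phi d = 0.
Proof.
rewrite /phi; case: (eqVneq d a) => [_|_]; last by rewrite mulmx0.
by apply/matrixP => i j; rewrite DarmE !mxE rk_inj_eq /= mulr0.
Qed.

Definition ridX w : 'M[k]_(rdim Lam + rdim Dl) := block_mx (ridem Lam w) 0 0 (ridem Dl w).
Definition rarX c : 'M[k]_(rdim Lam + rdim Dl) := block_mx (rarr Lam c) 0 (phi c) (rarr Dl c).

Lemma ridX_idem w : ridX w *m ridX w = ridX w.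
Proof. by rewrite /ridX mulmx_block !mulmx0 !mul0mx !addr0 !add0r !ridem_idem. Qed.

Lemma ridX_orth v w : v != w -> ridX v *m ridX w = 0.
Proof.
move=> vw; rewrite /ridX mulmx_block !mulmx0 !mul0mx !addr0 !add0r !ridem_orth //.
by rewrite block_mx0.
Qed.

Lemma ridX_sum : \sum_v ridX v = 1%:M.
Proof.
have H (r : seq Q0) : \sum_(v <- r) ridX v =
    block_mx (\sum_(v <- r) ridem Lam v) 0 0 (\sum_(v <- r) ridem Dl v).
  elim: r => [|v r IH]; first by rewrite !big_nil block_mx0.
  by rewrite !big_cons IH /ridX add_block_mx !addr0.
by rewrite H !ridem_sum -scalar_mx_block.
Qed.

Lemma rarX_src c : ridX (s c) *m rarX c = rarX c.
Proof.
by rewrite /ridX /rarX mulmx_block !mulmx0 !mul0mx !addr0 !add0r !rarr_src phi_src.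
Qed.

Lemma rarX_tgt c : rarX c *m ridX (t c) = rarX c.
Proof.
by rewrite /ridX /rarX mulmx_block !mulmx0 !mul0mx !addr0 !add0r !rarr_tgt phi_tgt.
Qed.

Lemma rarX_rad2 c d : rarX c *m rarX d = 0.
Proof.
rewrite /rarX mulmx_block !mulmx0 !mul0mx !addr0 !rarr_rad2 phi_L phi_D add0r.
by rewrite block_mx0.
Qed.

Definition Xm : mod := RMod ridX_idem ridX_orth ridX_sum rarX_src rarX_tgt rarX_rad2.

Definition fX : 'M[k]_(rdim Lam, rdim Xm) := row_mx 1%:M 0.
Definition gX : 'M[k]_(rdim Xm, rdim Dl) := col_mx 0 1%:M.

Lemma sesX : @ses k Q0 Q1 s t Lam Xm Dl fX gX.
Proof.
have ff : row_free fX.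
  by apply/row_freeP; exists (col_mx 1%:M 0); rewrite /fX mul_row_col mulmx1 mulmx0 addr0.
have fg : row_full gX.
  by apply/row_fullP; exists (row_mx 0 1%:M); rewrite /gX mul_row_col mulmx1 mulmx0 add0r.
split => //.
- split => w /=; rewrite /fX /ridX /rarX mul_mx_row mul_row_block !mulmx0 !mul0mx !mulmx1 !mul1mx !addr0 //.
- split => w /=; rewrite /gX /ridX /rarX mul_block_col mul_col_mx !mulmx0 !mul0mx !mulmx1 !mul1mx !addr0 ?add0r //.
split; first by rewrite /fX /gX mul_row_col mulmx0 mul0mx addr0.
by move: ff fg; rewrite /row_free /row_full => /eqP -> /eqP ->.
Qed.

End Ext.


Lemma inr_eq (x y : Q1) : (inr x == inr y :> B) = (x == y).
Proof. by apply/eqP/eqP => [[]|->]. Qed.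

Lemma no_double (n : nat) (C : mod -> Prop) a b :
  (2 <= n)%N -> n_cluster_tilting n C -> s a = s b -> t a = t b -> a = b.
Proof.
move=> n2 [_ H2 H3] sab tab; apply/eqP; apply/negPn/negP => ab.
have CL : C Lam by apply/H2 => Y _ i _; apply: proj_ext; apply: Lam_proj.
have CD : C Dl by apply/H3 => Y _ i _ Z _; apply: retract_ext1; apply: D_ret.
have e1 : ext_zero 1 Dl Lam by apply: (proj1 (H2 Dl) CD) => //; exact: n2.
have [h [[h1 h2] hg]] := e1 Dl erefl (Xm a) (fX a) (gX a) (sesX a).
have hr : rsubmx (h : 'M_(rdim Dl, rdim Lam + rdim Dl)) = 1%:M.
  by move: hg; rewrite -[h]hsubmxK /gX mul_row_col mulmx0 add0r mulmx1 row_mxKr.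
pose h1' := lsubmx (h : 'M_(rdim Dl, rdim Lam + rdim Dl)).
have eq c : rarr Dl c *m h1' = h1' *m rarr Lam c + phi a c.
  move: (h2 c); rewrite -[h]hsubmxK /= /rarX mul_mx_row mul_row_block.
  by case/eq_row_mx => -> _; rewrite hr mul1mx.
have ba : (b == a) = false by apply/negbTE; rewrite eq_sym.
have Eb := eq b; rewrite /phi ba addr0 in Eb.
have Ea := eq a; rewrite /phi eqxx in Ea.
have E1 := congr1 (fun M : 'M_(_, _) => M (rk (inr b)) (rk (inr a))) Eb.
have E2 := congr1 (fun M : 'M_(_, _) => M (rk (inr a)) (rk (inr b))) Eb.
have E3 := congr1 (fun M : 'M_(_, _) => M (rk (inr a)) (rk (inr a))) Ea.
have addE (A B' : 'M[k]_(rdim Dl, rdim Lam)) i j : (A + B') i j = A i j + B' i j.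
  by rewrite mxE.
rewrite addE in E3.
move: E1 E2 E3; rewrite /= !DarmE !LarmEr !mxE !enum_rankK !inr_eq !eqxx (negbTE ab) /=.
rewrite !mul1r !mulr1 !mulr0 !mul0r sab tab => -> <-.
by rewrite add0r => /esym/eqP; rewrite oner_eq0.
Qed.

End Main.

Theorem lemma2p2 (k : fieldType) (Q0 Q1 : finType) (s t : Q1 -> Q0)
    (n : nat) (C : rmod k s t -> Prop) :
  quiver_connected s t -> (2 <= n)%N -> n_cluster_tilting n C ->
  forall (v u : Q0) (a b : Q1),
    s a = v -> t a = u -> s b = v -> t b = u -> a = b.
Proof.
move=> _ n2 nct v u a b sa ta sb tb.
apply: (no_double n2 nct); by [rewrite sa sb | rewrite ta tb].
Qed.
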